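(* Let $X\subset Y$ be cubical sets in $\mathbb{R}^d$. Assume there exists a cubical set $Z=\bigcup_{i=1}^m Q_i$, where each $Q_i$ is an elementary cube with $\dim Q_i=d$, such that $Y\setminus X\subset Z$. Then $$\#Y-\#X\le 3^d|Z|,$$ where $|Z|$ is the Lebesgue measure of $Z$.
   Context: An elementary interval is $[l,l+1]$ or $[l]=[l,l]$ with $l\in\mathbb{Z}$; an elementary cube in $\mathbb{R}^d$ is a product of $d$ elementary intervals, and its dimension is the number of nondegenerate factors. A cubical set is a union of elementary cubes. For a cubical set $X$, $\#X$ denotes the number of elementary cubes (of all dimensions) contained in $X$. *)

(* Defs.v *)
From HB Require Import structures.
From mathcomp Require Import all_boot all_order all_algebra.
From mathcomp Require Import all_classical all_reals all_analysis.
From mathcomp Require Import finmap.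
Set Implicit Arguments. Unset Strict Implicit. Unset Printing Implicit Defensive.
Import Order.TTheory GRing.Theory Num.Theory.
Local Open Scope classical_set_scope.
Local Open Scope ring_scope.

(* An elementary interval is encoded by (l, b) : int * bool:
   b = true  gives [l, l+1],  b = false gives [l] = [l, l]. *)
Definition elem_interval_set (R : realType) (I : int * bool) : set R :=
  [set x | I.1%:~R <= x <= (I.1 + (I.2 : nat)%:Z)%:~R].

Definition cube (d : nat) := {ffun 'I_d -> int * bool}.

Definition cube_set (R : realType) (d : nat) (Q : cube d) : set ('I_d -> R) :=
  [set x | forall i : 'I_d, @elem_interval_set R (Q i) (x i)].

Definition cube_dim (d : nat) (Q : cube d) : nat := #|[set i | (Q i).2]|.

Definition cubes_union (R : realType) (d : nat) (s : seq (cube d)) : set ('I_d -> R) :=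
  [set x | exists2 Q, Q \in s & @cube_set R d Q x].

Definition cubical (R : realType) (d : nat) (X : set ('I_d -> R)) : Prop :=
  exists s : seq (cube d), X = @cubes_union R d s.

(* #X : number of elementary cubes contained in X (finite for cubical X) *)
Definition ncubes (R : realType) (d : nat) (X : set ('I_d -> R)) : nat :=
  #|` fset_set [set Q : cube d | @cube_set R d Q `<=` X] |.

Definition box_set (R : realType) (d : nat) (B : ('I_d -> R) * ('I_d -> R)) : set ('I_d -> R) :=
  [set x | forall i, B.1 i <= x i <= B.2 i].

Definition box_vol (R : realType) (d : nat) (B : ('I_d -> R) * ('I_d -> R)) : R :=
  \prod_(i < d) Num.max (B.2 i - B.1 i) 0.

Definition lebesgue_outer (R : realType) (d : nat) (A : set ('I_d -> R)) : \bar R :=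
  ereal_inf [set (\sum_(0 <= k <oo) (box_vol (B k))%:E)%E |
             B in [set B : nat -> ('I_d -> R) * ('I_d -> R) |
                   A `<=` \bigcup_k box_set (B k)]].

(* Main.v *)
Require Import Defs.
Set Warnings "-all".
From HB Require Import structures.
From mathcomp Require Import all_boot all_order all_algebra.
From mathcomp Require Import all_classical all_reals all_analysis.
From mathcomp Require Import finmap.
From mathcomp Require Import zify ring lra.
Import Order.TTheory GRing.Theory Num.Theory.
Local Open Scope classical_set_scope.
Local Open Scope ring_scope.
Import numFieldTopology.Exports numFieldNormedType.Exports.
Section PartA.
Variables (R : realType) (d : nat).

Definition center (Q : cube d) : 'I_d -> R :=
  fun i => (Q i).1%:~R + (if (Q i).2 then 2^-1 else 0).

Lemma center_in (Q : cube d) : @cube_set R d Q (center Q).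
Proof.
move=> i; rewrite /elem_interval_set /center /=.
case: (Q i) => l [] /=.
  rewrite intrD /= -[(1%Z)%:~R]/(1 : R); apply/andP; split; lra.
by rewrite !addr0 lexx.
Qed.

Lemma int_half_le (x y : int) : (x%:~R : R) <= y%:~R + 2^-1 -> (x <= y)%R.
Proof.
move=> h; have : (x%:~R : R) < (y + 1)%:~R by rewrite intrD; lra.
by rewrite ltr_int ltzD1.
Qed.

Lemma int_half_ge (x y : int) : (y%:~R : R) + 2^-1 <= x%:~R -> (y < x)%R.
Proof.
move=> h; have : (y%:~R : R) < x%:~R by lra.
by rewrite ltr_int.
Qed.

Definition fopts (I : int * bool) : seq (int * bool) :=
  [:: I; (I.1, false); (I.1 + 1, false)].

Definition faces (Q' : cube d) : seq (cube d) :=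
  [seq [ffun i => nth (Q' i) (fopts (Q' i)) (c i)] | c : {ffun 'I_d -> 'I_3}].

Lemma size_faces Q' : size (faces Q') = (3 ^ d)%N.
Proof. by rewrite /faces size_image card_ffun !card_ord. Qed.

Lemma faces_mem (Q Q' : cube d) : (forall i, Q i \in fopts (Q' i)) -> Q \in faces Q'.
Proof.
move=> h; rewrite /faces; apply/mapP.
exists [ffun i => (inord (index (Q i) (fopts (Q' i))) : 'I_3)]; first by rewrite mem_enum.
apply/ffunP => i; rewrite !ffunE inordK ?nth_index //.
by rewrite -[3%N]/(size (fopts (Q' i))) index_mem.
Qed.

Lemma center_face (Q Q' : cube d) : @cube_set R d Q' (center Q) ->
  @cube_set R d Q `<=` cube_set Q' /\ Q \in faces Q'.
Proof.
move=> hc.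
have key : forall i, (Q i = Q' i) \/
    ((Q i = ((Q' i).1, false)) \/ (Q i = ((Q' i).1 + 1, false) /\ (Q' i).2)).
  move=> i; move: (hc i); rewrite /elem_interval_set /center /=.
  case: (Q i) => l b; case: (Q' i) => l' b' /= /andP[h1 h2].
  case: b h1 h2 => /= h1 h2.
    have a1 := @int_half_le _ _ h1.
    case: b' h2 => /= h2.
      have a2 : (l%:~R : R) + 2^-1 <= (l' + 1)%:~R by lra.
      rewrite intrD in a2.
      have a3 : (l%:~R : R) < l'%:~R + 1 by lra.
      have a4 : (l < l' + 1)%R by rewrite -(ltr_int R) intrD.
      left; congr pair; lia.
    rewrite addr0 in h1 h2.
    have := @int_half_ge _ _ h2; lia.
  rewrite addr0 in h1 h2.
  rewrite (ler_int R) in h1; rewrite (ler_int R) in h2.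
  case: b' h2 => /= h2.
    have [e|ne] := eqVneq l l'; first by subst; right; left.
    right; right; split => //; congr pair; lia.
  right; left; congr pair; lia.
split.
  move=> x hx i; have := hx i; rewrite /elem_interval_set.
  case: (key i) => [->|[->|[-> hb]]] //=.
  - case: (Q' i) => l' b' /= /andP[h1 h2]; rewrite addr0 in h2; apply/andP; split => //.
    apply: (le_trans h2); rewrite ler_int; case: b'; lia.
  - move: hb; case: (Q' i) => l' b' /= -> /andP[h1 h2]; rewrite addr0 in h1 h2.
    apply/andP; split => //.
    apply: le_trans h1; rewrite ler_int; lia.
apply: faces_mem => i; rewrite /fopts !inE.
by case: (key i) => [->|[->|[-> _]]]; rewrite eqxx ?orbT.
Qed.

Lemma cubes_sub_faces s (Q : cube d) :
  cube_set Q `<=` @cubes_union R d s -> Q \in flatten [seq faces Q' | Q' <- s].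
Proof.
move=> h; have [Q' Q's hQ'] := h _ (center_in Q).
apply/flatten_mapP; exists Q' => //.
by have [] := @center_face _ _ hQ'.
Qed.

Definition cubesin (X : set ('I_d -> R)) := [set Q : cube d | cube_set Q `<=` X].

Lemma cubesin_fin X : cubical X -> finite_set (cubesin X).
Proof.
move=> [s ->]; apply: (@sub_finite_set _ _ [set` flatten [seq faces Q' | Q' <- s]]);
  last exact: finite_seq.
by move=> Q /cubes_sub_faces.
Qed.

Lemma size_flatten_faces s : size (flatten [seq faces Q' | Q' <- s]) = (size s * 3 ^ d)%N.
Proof. by elim: s => //= a s IH; rewrite size_cat IH size_faces mulSn. Qed.

Lemma count_part X Y Qs : cubical X -> cubical Y -> X `<=` Y ->
  Y `\` X `<=` @cubes_union R d Qs ->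
  (ncubes Y <= ncubes X + size (undup Qs) * 3 ^ d)%N.
Proof.
move=> cX cY XY YX.
pose F := flatten [seq faces Q' | Q' <- undup Qs].
have sub : cubesin Y `<=` cubesin X `|` [set` F].
  move=> Q QY.
  have [s es] := cX.
  have [inX|ninX] := pselect (X (center Q)).
    left; move: inX; rewrite es => -[Q'' Q''s hQ''].
    have [sub _] := @center_face _ _ hQ''.
    move=> x /sub hx; by exists Q''.
  right.
  have : cubes_union Qs (center Q) by apply: YX; split => //; apply: QY; exact: center_in.
  move=> [Q' Q's hQ']; rewrite /F /=; apply/flatten_mapP; exists Q'.
    by rewrite mem_undup.
  by have [] := @center_face _ _ hQ'.
have fX := @cubesin_fin _ cX; have fY := @cubesin_fin _ cY.
have fF : finite_set [set` F] := finite_seq F.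
rewrite /ncubes -/(cubesin Y) -/(cubesin X).
have := sub; rewrite fset_set_sub //; last by rewrite finite_setU; split.
rewrite fset_setU // => /fsubset_leq_card h; apply: (leq_trans h).
apply: (leq_trans (leq_card_fsetU _ _).1); rewrite leq_add2l.
have -> : [set` F] = [set` [fset x in F]%fset].
  by apply/seteqP; split => x /=; rewrite inE.
rewrite set_fsetK card_fseq; apply: (leq_trans (size_undup _)).
by rewrite /F size_flatten_faces.
Qed.

End PartA.
Section Helpers.
Variable R : realType.

Lemma prod_ind (I : finType) (b : I -> bool) :
  \prod_(i : I) ((b i)%:R : R) = ([forall i, b i])%:R.
Proof.
case: (boolP [forall i, b i]) => [/forallP h|/forallPn [i hi]].
  by rewrite big1 // => i _; rewrite h.
rewrite (bigD1 i) //= (negbTE hi) mul0r //.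
Qed.

Lemma count_le (n : nat) (x y : R) :
  \sum_(t < n) ((x <= t%:R <= y)%R : bool)%:R <= Num.max (y - x + 1) 0.
Proof.
elim: n y => [|n IH] y; first by rewrite big_ord0 le_max lexx orbT.
rewrite big_ord_recr /=.
case: (boolP (x <= n%:R <= y)) => [/andP[h1 h2]|hn].
  have e : \sum_(t < n) ((x <= t%:R <= y)%R : bool)%:R =
           \sum_(t < n) ((x <= t%:R <= y - 1)%R : bool)%:R :> R.
    apply: eq_bigr => t _; congr (_ %:R); congr (_ && _).
    have ht : (t.+1%:R : R) <= n%:R by rewrite ler_nat ltn_ord.
    rewrite -addn1 natrD in ht.
    apply/idP/idP => h; lra.
  rewrite e; have := IH (y - 1).
  have -> : Num.max (y - 1 - x + 1) 0 = y - x by rewrite max_l; lra.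
  rewrite max_l; last lra.
  move=> h; rewrite /= mulr1n; lra.
by rewrite /= mulr0n addr0.
Qed.

Lemma count_exact (n u N : nat) :
  \sum_(t < n) ((u < t < u + N)%N : bool)%:R = ((minn n (u + N)) - u.+1)%:R :> R.
Proof.
elim: n => [|n IH]; first by rewrite big_ord0 min0n.
rewrite big_ord_recr /= IH -natrD; congr (_%:R).
case: (ltnP n (u + N)) => h; case: (ltnP u n) => h2 /=; rewrite ?andbT ?andbF /=; lia.
Qed.

Lemma bernoulli (t : R) (n : nat) : 0 <= t <= 1 -> 1 - n%:R * t <= (1 - t) ^+ n.
Proof.
move=> /andP[t0 t1]; elim: n => [|n IH]; first by rewrite expr0 mul0r subr0.
rewrite exprS.
have h1 : 0 <= 1 - t by lra.
have : (1 - t) * (1 - n%:R * t) <= (1 - t) * (1 - t) ^+ n by rewrite ler_wpM2l.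
rewrite -addn1 natrD.
have : 0 <= n%:R * t * t by rewrite mulr_ge0 // mulr_ge0.
move=> h2 h3; nra.
Qed.

Lemma prod_bound (I : Type) (s : seq I) (L : I -> R) (t : R) :
  (forall i, 0 <= L i) -> 0 <= t <= 1 ->
  \prod_(i <- s) (L i + t) <= \prod_(i <- s) L i + t * \prod_(i <- s) (L i + 2).
Proof.
move=> L0 /andP[t0 t1]; elim: s => [|a s IH]; first by rewrite !big_nil; lra.
rewrite !big_cons.
set P := \prod_(i <- s) (L i + t) in IH *.
set P0 := \prod_(i <- s) L i in IH *.
set C := \prod_(i <- s) (L i + 2) in IH *.
have hP0 : 0 <= P0 by apply: prodr_ge0.
have hPC : P0 <= C by apply: ler_prod => i _; rewrite L0 /=; have := L0 i; lra.
have hP : 0 <= P by apply: prodr_ge0 => i _; have := L0 i; lra.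
have La := L0 a.
have h1 : (L a + t) * P <= (L a + t) * (P0 + t * C) by rewrite ler_wpM2l //; lra.
have h2 : 0 <= t * t * C by rewrite mulr_ge0 // ?mulr_ge0 //; lra.
have h3 : t * t * C <= t * C by rewrite ler_wpM2r; [lra| lra | nra].
nra.
Qed.

End Helpers.
Section Grid.
Variables (R : realType) (d : nat).

Lemma sum_const_seq (T : Type) (s : seq T) (c : R) :
  \sum_(x <- s) c = (size s)%:R * c.
Proof.
elim: s => [|a s IH]; first by rewrite big_nil mul0r.
by rewrite big_cons IH /= -addn1 natrD; ring.
Qed.

Lemma sum_count (T : Type) (s : seq T) (P : pred T) :
  \sum_(x <- s) ((P x)%:R : R) = (count P s)%:R.
Proof.
elim: s => [|a s IH]; first by rewrite big_nil.
by rewrite big_cons IH /= natrD.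
Qed.

Definition pt1 (N A t : nat) : R := t%:R / N%:R - A%:R.

Lemma interval_count (n N : nat) (a : int) (A : nat) :
  (0 < N)%N -> (`|a| + 1 <= A)%N -> n = (2 * A * N)%N ->
  \sum_(t < n) ((a%:~R < pt1 N A t < a%:~R + 1)%R : bool)%:R = (N.-1)%:R :> R.
Proof.
move=> N0 aA ->.
have Npos : (0 : R) < N%:R by rewrite ltr0n.
pose u := absz (a + A%:Z).
have hu : (u%:R : R) = a%:~R + A%:R.
  rewrite -[u%:R]/((u%:Z)%:~R) gez0_abs ?intrD //; lia.
have -> : \sum_(t < 2 * A * N) ((a%:~R < pt1 N A t < a%:~R + 1)%R : bool)%:R
   = \sum_(t < 2 * A * N) ((u * N < t < u * N + N)%N : bool)%:R :> R.
  apply: eq_bigr => t _; congr (_%:R).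
  have -> : (a%:~R < pt1 N A t) = ((u * N)%:R < (t%:R : R)).
    by rewrite /pt1 ltrBrDr -hu ltr_pdivlMr // natrM.
  have -> : (pt1 N A t < a%:~R + 1) = ((t%:R : R) < (u * N + N)%:R).
    rewrite /pt1 ltrBlDr ltr_pdivrMr // natrD natrM.
    have -> : a%:~R + 1 + A%:R = (u%:R : R) + 1 by rewrite hu; lra.
    by rewrite mulrDl mul1r.
  by rewrite !ltr_nat.
rewrite count_exact; congr (_%:R).
have : (u + 1 <= 2 * A)%N by lia.
nia.
Qed.

Lemma box_count (n N A : nat) (c e : R) : (0 < N)%N ->
  \sum_(t < n) ((c <= pt1 N A t <= e)%R : bool)%:R <= N%:R * Num.max (e - c) 0 + 1.
Proof.
move=> N0; have Npos : (0 : R) < N%:R by rewrite ltr0n.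
have -> : \sum_(t < n) ((c <= pt1 N A t <= e)%R : bool)%:R =
   \sum_(t < n) (((c + A%:R) * N%:R <= t%:R <= (e + A%:R) * N%:R)%R : bool)%:R :> R.
  apply: eq_bigr => t _; congr (_%:R).
  by rewrite /pt1 lerBrDr ler_pdivlMr // lerBlDr ler_pdivrMr.
apply: le_trans (count_le _ _ _ _) _.
have m1 : e - c <= Num.max (e - c) 0 by rewrite le_max lexx.
have m2 : 0 <= Num.max (e - c) 0 by rewrite le_max lexx orbT.
rewrite ge_max; apply/andP; split; last by rewrite addr_ge0 // mulr_ge0 // ltW.
nra.
Qed.

Definition box_side (B : ('I_d -> R) * ('I_d -> R)) (i : 'I_d) := Num.max (B.2 i - B.1 i) 0.

Lemma grid_count (s : seq (cube d)) (K : nat) (C : nat -> ('I_d -> R) * ('I_d -> R))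
    (A N : nat) :
  uniq s -> (forall Q, Q \in s -> forall i, (Q i).2) ->
  (forall Q, Q \in s -> forall i, (`|(Q i).1| + 1 <= A)%N) ->
  (forall x, @cubes_union R d s x -> exists2 k, (k < K)%N & box_set (C k) x) ->
  (0 < N)%N ->
  (size s)%:R * (N.-1)%:R ^+ d <=
    \sum_(k < K) \prod_(i < d) (N%:R * box_side (C k) i + 1).
Proof.
move=> us full bnd cov N0.
pose n := (2 * A * N)%N.
pose f (Q : cube d) (i : 'I_d) (t : 'I_n) : R :=
  (((Q i).1%:~R < pt1 N A t < (Q i).1%:~R + 1)%R : bool)%:R.
pose g (k : nat) (i : 'I_d) (t : 'I_n) : R :=
  (((C k).1 i <= pt1 N A t <= (C k).2 i)%R : bool)%:R.
have L1 : (size s)%:R * (N.-1)%:R ^+ d = \sum_(Q <- s) \prod_i \sum_(t < n) f Q i t.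
  rewrite -sum_const_seq; apply: eq_big_seq => Q hQ.
  rewrite (eq_bigr (fun _ => (N.-1)%:R)); first by rewrite prodr_const card_ord.
  move=> i _; rewrite /f; exact: (@interval_count n N (Q i).1 A N0 (bnd Q hQ i) erefl).
have R1 : forall k : 'I_K, \prod_i \sum_(t < n) g k i t <=
     \prod_(i < d) (N%:R * box_side (C k) i + 1).
  move=> k; apply: ler_prod => i _; apply/andP; split.
    by apply: sumr_ge0 => t _; rewrite ler0n.
  exact: box_count.
rewrite L1; apply: le_trans (ler_sum _ (fun k _ => R1 k)).
under eq_bigr do rewrite bigA_distr_bigA.
under [X in _ <= X]eq_bigr do rewrite bigA_distr_bigA.
rewrite exchange_big [X in _ <= X]exchange_big /=.
apply: ler_sum => w _.
pose x : 'I_d -> R := fun i => pt1 N A (w i).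
have ef : forall Q, \prod_i f Q i (w i) =
    ([forall i, ((Q i).1%:~R < x i < (Q i).1%:~R + 1)%R])%:R.
  by move=> Q; rewrite /f prod_ind.
have eg : forall k, \prod_i g k i (w i) =
    ([forall i, ((C k).1 i <= x i <= (C k).2 i)%R])%:R.
  by move=> k; rewrite /g prod_ind.
under eq_bigr do rewrite ef.
under [X in _ <= X]eq_bigr do rewrite eg.
rewrite sum_count.
set P := fun Q : cube d => [forall i, ((Q i).1%:~R < x i < (Q i).1%:~R + 1)%R].
case: (boolP (has P s)) => [/hasP [Q0 Q0s PQ0]|hn]; last first.
  have -> : count P s = 0%N by apply/eqP; rewrite -leqn0 leqNgt -has_count.
  by apply: sumr_ge0 => k _; rewrite ler0n.
have c1 : (count P s <= 1)%N.
  have -> : count P s = count (pred1 Q0) s.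
    apply: eq_in_count => Q Qs /=.
    apply/idP/eqP => [PQ|->//].
    apply/ffunP => i.
    move: (forallP PQ i) (forallP PQ0 i) => /andP[h1 h2] /andP[h3 h4].
    have a1 : ((Q i).1 <= (Q0 i).1)%R.
      by rewrite -(ltzD1 _ (Q0 i).1) -(ltr_int R) intrD; lra.
    have a2 : ((Q0 i).1 <= (Q i).1)%R.
      by rewrite -(ltzD1 _ (Q i).1) -(ltr_int R) intrD; lra.
    move: (full Q Qs i) (full Q0 Q0s i).
    case: (Q i) a1 a2 => l b; case: (Q0 i) => l' b' /= a1 a2 -> ->.
    congr pair; lia.
  by rewrite count_uniq_mem //; case: (Q0 \in s).
have : @cubes_union R d s x.
  exists Q0 => // i; move: (forallP PQ0 i) => /andP[h1 h2].
  rewrite /elem_interval_set /=; move: (full Q0 Q0s i) h1 h2.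
  case: (Q0 i) => l b /= -> h1 h2; rewrite intrD /= -[(1%Z)%:~R]/(1 : R).
  apply/andP; split; lra.
move=> /cov [k kK hk].
rewrite (bigD1 (Ordinal kK)) //=.
have -> : [forall i, ((C k).1 i <= x i <= (C k).2 i)%R] by apply/forallP => i; exact: hk.
apply: (@le_trans _ _ 1).
  by rewrite -[X in _ <= X]/(1%:R : R) ler_nat.
rewrite /= mulr1n lerDl; by apply: sumr_ge0 => j _; rewrite ler0n.
Qed.

End Grid.
Arguments box_side {R d}.
Section GridVol.
Variables (R : realType) (d : nat).

Lemma exA (s : seq (cube d)) : exists A, forall Q, Q \in s -> forall i, (`|(Q i).1| + 1 <= A)%N.
Proof.
elim: s => [|Q s [A hA]]; first by exists 0%N.
exists (maxn (\max_i (`|(Q i).1| + 1)%N) A) => Q'; rewrite inE => /orP[/eqP ->|hQ'] i.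
  by rewrite leq_max (@leq_bigmax _ (fun i => (`|(Q i).1| + 1)%N) i).
by rewrite leq_max (hA _ hQ') orbT.
Qed.

Lemma grid_vol (s : seq (cube d)) (K : nat) (C : nat -> ('I_d -> R) * ('I_d -> R)) :
  uniq s -> (forall Q, Q \in s -> forall i, (Q i).2) ->
  (forall x, @cubes_union R d s x -> exists2 k, (k < K)%N & box_set (C k) x) ->
  (size s)%:R <= \sum_(k < K) box_vol (C k).
Proof.
move=> us full cov; have [A bnd] := exA s.
set m : R := (size s)%:R.
set S := \sum_(k < K) box_vol (C k).
set D := \sum_(k < K) \prod_(i < d) (box_side (C k) i + 2).
have m0 : 0 <= m by rewrite ler0n.
have sd0 : forall k i, 0 <= box_side (C k) i by move=> k i; rewrite /box_side le_max lexx orbT.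
have D0 : 0 <= D.
  apply: sumr_ge0 => k _; apply: prodr_ge0 => i _; have := sd0 k i; lra.
have key : forall M : nat, let t := (M.+1%:R : R)^-1 in m <= S + t * (D + m * d%:R).
  move=> M t.
  have Npos : (0 : R) < M.+1%:R by rewrite ltr0n.
  have t0 : 0 < t by rewrite invr_gt0.
  have t1 : t <= 1 by rewrite invf_le1 // ler1n.
  have h := @grid_count R d s K C A M.+1 us full bnd cov erefl.
  have e1 : (M.+1.-1%:R : R) = M.+1%:R * (1 - t).
    by rewrite /t mulrBr mulr1 mulfV ?gt_eqF // mulrSr addrK.
  have e2 : forall k : 'I_K, \prod_(i < d) (M.+1%:R * box_side (C k) i + 1)
      = M.+1%:R ^+ d * \prod_(i < d) (box_side (C k) i + t).
    move=> k; have -> : (M.+1%:R : R) ^+ d = \prod_(i < d) (M.+1%:R : R) by rewrite prodr_const card_ord.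
    rewrite -big_split /=.
    apply: eq_bigr => i _; rewrite /t mulrDr mulfV ?gt_eqF //.
  rewrite e1 exprMn (eq_bigr _ (fun k _ => e2 k)) -mulr_sumr in h.
  rewrite mulrCA ler_pM2l ?exprn_gt0 // in h.
  have h2 : \sum_(k < K) \prod_(i < d) (box_side (C k) i + t) <= S + t * D.
    rewrite /S /D mulr_sumr -big_split /=; apply: ler_sum => k _.
    apply: prod_bound; first exact: sd0.
    by rewrite (ltW t0) t1.
  have h3 : 1 - d%:R * t <= (1 - t) ^+ d by apply: bernoulli; apply/andP; split => //; exact: ltW.
  have h4 : m * (1 - d%:R * t) <= m * (1 - t) ^+ d by rewrite ler_wpM2l.
  nra.
apply/ler_addgt0Pr => e e0.
pose M := Num.trunc ((D + m * d%:R) / e).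
have := key M; set t := (M.+1%:R : R)^-1 => hk.
apply: (le_trans hk); rewrite lerD2l.
have hM : (D + m * d%:R) / e < M.+1%:R by apply: truncnS_gt.
have Npos : (0 : R) < M.+1%:R by rewrite ltr0n.
rewrite ltr_pdivrMr // in hM.
rewrite /t mulrC ler_pdivrMr // [e * _]mulrC; exact: ltW.
Qed.

End GridVol.
Definition PTR (R : realType) (d : nat) := prod_topology (fun _ : 'I_d => (R : topologicalType)).
HB.instance Definition _ R d := Topological.on (PTR R d).
HB.instance Definition _ (R : realType) d := isPointed.Build (PTR R d) (fun _ => (0 : R)).

Section Compactness.
Variables (R : realType) (d : nat).
Local Notation PT := (PTR R d).

Definition openbox (B : ('I_d -> R) * ('I_d -> R)) : set ('I_d -> R) :=
  [set x | forall i, B.1 i < x i < B.2 i].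

Lemma open_boxr (r : seq 'I_d) (a b : 'I_d -> R) :
  open ([set x : PT | forall i, i \in r -> a i < x i < b i]).
Proof.
elim: r => [|i r IH].
  have -> : [set x : PT | forall i, i \in [::] -> a i < x i < b i] = setT.
    by apply/seteqP; split => x //= _ i.
  exact: openT.
have -> : [set x : PT | forall j, j \in i :: r -> a j < x j < b j] =
   (proj i @^-1` `]a i, b i[%classic) `&` [set x : PT | forall j, j \in r -> a j < x j < b j].
  apply/seteqP; split => x /=.
    move=> h; split; last by move=> j jr; apply: h; rewrite inE jr orbT.
    by rewrite /proj /= in_itv /=; apply: h; rewrite inE eqxx.
  move=> [h1 h2] j; rewrite inE => /orP[/eqP ->|jr]; last exact: h2.
  by move: h1; rewrite /proj /= in_itv.
apply: openI => //; apply: open_comp; last exact: itv_open.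
move=> x _; exact: proj_continuous.
Qed.

Lemma openbox_open B : open (openbox B : set PT).
Proof.
have -> : (openbox B : set PT) = [set x : PT | forall i, i \in enum 'I_d -> B.1 i < x i < B.2 i].
  apply/seteqP; split => x /= h i //; apply: h; by rewrite mem_enum.
exact: open_boxr.
Qed.

Lemma cube_compact (Q : cube d) : compact (@cube_set R d Q : set PT).
Proof.
have -> : (@cube_set R d Q : set PT) = [set f : PT | forall i,
    `[((Q i).1%:~R : R), ((Q i).1 + (Q i).2)%:~R]%classic (f i)].
  by apply/seteqP; split => x /= h i; have := h i; rewrite in_itv.
apply: (@tychonoff _ (fun _ : 'I_d => (R : topologicalType)) (fun i => `[((Q i).1%:~R : R), ((Q i).1 + (Q i).2)%:~R]%classic)) => i.
exact: segment_compact.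
Qed.

Lemma union_compact (s : seq (cube d)) : compact (@cubes_union R d s : set PT).
Proof.
have -> : (@cubes_union R d s : set PT) = \big[setU/set0]_(Q <- s) (@cube_set R d Q : set PT).
  elim: s => [|Q s IH].
    by rewrite big_nil; apply/seteqP; split => x // [Q].
  rewrite big_cons -IH; apply/seteqP; split => x.
    by move=> [Q'] ; rewrite inE => /orP[/eqP ->|Q's] h; [left|right; exists Q'].
  case=> [h|[Q' Q's h]]; first by exists Q => //; rewrite inE eqxx.
  by exists Q' => //; rewrite inE Q's orbT.
apply: bigsetU_compact => Q _; exact: cube_compact.
Qed.

Lemma finite_cover (s : seq (cube d)) (C : nat -> ('I_d -> R) * ('I_d -> R)) :
  (forall x, @cubes_union R d s x -> exists k, openbox (C k) x) ->
  exists K, forall x, @cubes_union R d s x -> exists2 k, (k < K)%N & box_set (C k) x.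
Proof.
move=> hcov.
have hc : cover_compact (@cubes_union R d s : set PT).
  by rewrite -(@compact_cover PT); exact: union_compact.
have [] := hc nat setT (fun k => openbox (C k) : set PT).
- by move=> k _; exact: openbox_open.
- by move=> x /hcov [k hk]; exists k.
move=> D' _ hD'; exists (\max_(k <- D') k).+1 => x /hD' [k kD hk].
exists k.
  by rewrite ltnS (@leq_bigmax_seq _ _ xpredT (fun k => k)).
by move=> i; have /andP[h1 h2] := hk i; rewrite !ltW.
Qed.

End Compactness.
Arguments openbox {R d}.
Section Final.
Variables (R : realType) (d : nat).

Lemma geo_sum (K : nat) : \sum_(k < K) (((2 : R) ^+ k.+1)^-1) <= 1.
Proof.
suff -> : \sum_(k < K) (((2 : R) ^+ k.+1)^-1) = 1 - ((2 : R) ^+ K)^-1.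
  by rewrite lerBlDr lerDl invr_ge0 exprn_ge0.
elim: K => [|K IH]; first by rewrite big_ord0 expr0 invr1 subrr.
rewrite big_ord_recr /= IH exprS.
have h : (2 : R) ^+ K != 0 by rewrite expf_neq0.
by field.
Qed.

Lemma outer_lb (s : seq (cube d)) : uniq s -> (forall Q, Q \in s -> forall i, (Q i).2) ->
  (((size s)%:R : R)%:E <= lebesgue_outer (@cubes_union R d s))%E.
Proof.
move=> us full; apply/ereal_infP => _ [B hB <-].
apply/lee_addgt0Pr => e e0.
pose side k i := box_side (B k) i.
have sd0 : forall k i, 0 <= side k i by move=> k i; rewrite /side /box_side le_max lexx orbT.
pose D k := \prod_(i < d) (side k i + 2).
have D0 : forall k, 0 < D k.
  by move=> k; apply: prodr_gt0 => i _; have := sd0 k i; lra.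
pose eta k := e / (2 : R) ^+ k.+1.
have eta0 : forall k, 0 < eta k by move=> k; rewrite divr_gt0 // exprn_gt0.
pose t k := Num.min 1 (eta k / D k).
have t0 : forall k, 0 < t k.
  by move=> k; rewrite lt_min ltr01 /= divr_gt0.
have t1 : forall k, t k <= 1 by move=> k; rewrite ge_min lexx.
have tD : forall k, t k * D k <= eta k.
  move=> k; rewrite -ler_pdivlMr //; rewrite ge_min lexx orbT //.
pose C k : ('I_d -> R) * ('I_d -> R) :=
  (fun i => (B k).1 i - t k / 2, fun i => (B k).2 i + t k / 2).
have hcov : forall x, @cubes_union R d s x -> exists k, openbox (C k) x.
  move=> x /hB [k _ hk]; exists k => i /=.
  have /andP[h1 h2] := hk i; have := t0 k => ht; apply/andP; split; lra.
have [K hK] := @finite_cover R d s C hcov.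
have hg := @grid_vol R d s K C us full hK.
have hvol : forall k, box_vol (C k) <= box_vol (B k) + eta k.
  move=> k; apply: (@le_trans _ _ (\prod_(i < d) (side k i + t k))).
    apply: ler_prod => i _; apply/andP; split.
      by rewrite le_max lexx orbT.
    rewrite ge_max; apply/andP; split; last by have := sd0 k i; have := t0 k; lra.
    have : (B k).2 i - (B k).1 i <= side k i by rewrite /side /box_side le_max lexx.
    rewrite /=; lra.
  have tt : 0 <= t k <= 1 by rewrite (ltW (t0 k)) t1.
  apply: (le_trans (@prod_bound R _ _ (side k) (t k) (sd0 k) tt)).
  rewrite lerD2l; exact: tD.
have h1 : (size s)%:R <= (\sum_(k < K) box_vol (B k)) + e.
  have hs : \sum_(k < K) box_vol (C k) <= \sum_(k < K) (box_vol (B k) + eta k).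
    by apply: ler_sum => k _; exact: hvol.
  apply: (le_trans hg _); apply: (le_trans hs _).
  rewrite big_split /= lerD2l /eta -mulr_sumr.
  rewrite -[X in _ <= X]mulr1; apply: ler_wpM2l; first exact: ltW.
  exact: geo_sum.
apply: (le_trans (_ : _ <= (\sum_(k < K) box_vol (B k))%:E + e%:E)%E).
  by rewrite -EFinD lee_fin.
apply: leeD2r; rewrite -sumEFin.
rewrite -(big_mkord xpredT (fun k => (box_vol (B k))%:E)).
apply: nneseries_lim_ge => k _ _; rewrite lee_fin; apply: prodr_ge0 => i _.
by rewrite le_max lexx orbT.
Qed.

End Final.
Theorem lemma3p2 (R : realType) (d : nat) (X Y : set ('I_d -> R))
  (Qs : seq (cube d)) :
  cubical X -> cubical Y -> X `<=` Y ->
  (forall Q, Q \in Qs -> cube_dim Q = d) ->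
  Y `\` X `<=` @cubes_union R d Qs ->
  (((ncubes Y)%:R - (ncubes X)%:R : R)%:E
     <= ((3 ^ d)%:R : R)%:E * lebesgue_outer (@cubes_union R d Qs))%E.
Proof.
move=> cX cY XY dimQ YX.
have hc := @count_part R d X Y Qs cX cY XY YX.
have full : forall Q, Q \in undup Qs -> forall i, (Q i).2.
  move=> Q; rewrite mem_undup => /dimQ hQ i.
  have ec : cube_dim Q = #|[pred i : 'I_d | (Q i).2]|.
    apply: eq_card => j; rewrite inE /=; apply/idP/idP => h.
      by move: h; rewrite in_setE.
    by rewrite in_setE.
  have := cardC [pred i : 'I_d | (Q i).2]; rewrite card_ord -ec hQ => h.
  move/eqP: h; rewrite -[X in _ == X]addn0 eqn_add2l => /eqP h0.
  have := card0_eq h0 i; by rewrite !inE => /negbFE.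
have hl := @outer_lb R d (undup Qs) (undup_uniq Qs) full.
have eU : @cubes_union R d (undup Qs) = @cubes_union R d Qs.
  by apply/seteqP; split => x [Q hQ h]; exists Q => //; move: hQ; rewrite mem_undup.
rewrite eU in hl.
apply: (@le_trans _ _ (((3 ^ d)%:R : R)%:E * ((size (undup Qs))%:R)%:E)%E).
  rewrite -EFinM lee_fin lerBlDl -natrM -natrD ler_nat mulnC; exact: hc.
by apply: lee_wpmul2l => //; rewrite lee_fin ler0n.
Qed.
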